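(* Let $\overline{P}$ be a Preparata code of length $n$, let $x\in\overline{P}$, let $m,l,k\in\mathrm{supp}(x)$, and let $u,v$ be distinct codewords of $\overline{P}$, both at Hamming distance $6$ from $x$ and both having zeros in positions $m,l,k$. Then there is no coordinate in $\mathrm{supp}(x)\setminus\{m,l,k\}$ in which both $u$ and $v$ are zero, and there is no coordinate in $\{1,\ldots,n\}\setminus\mathrm{supp}(x)$ in which both $u$ and $v$ are one.
   Context: $E^n$ is the set of binary vectors of length $n$ with the Hamming distance; $\mathrm{supp}(x)=\{k:x_k=1\}$. A Preparata code is a binary code of length $n=2^m$ ($m\ge 4$ even) with minimum distance $6$ and maximum possible cardinality among binary codes of that length and minimum distance. *)

(* Defs.v *)
From mathcomp Require Import all_boot.
Set Implicit Arguments. Unset Strict Implicit. Unset Printing Implicit Defensive.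

(* Binary words of length n: E^n, coordinates indexed by 'I_n (= {0..n-1}). *)
Definition word (n : nat) := {ffun 'I_n -> bool}.

Definition supp n (x : word n) : {set 'I_n} := [set i | x i].

Definition hdist n (x y : word n) : nat := #|[set i | x i != y i]|.

Definition code (n : nat) := {set word n}.

Definition min_dist_ge n (C : code n) (d : nat) : Prop :=
  forall x y, x \in C -> y \in C -> x != y -> d <= hdist x y.

Definition min_dist n (C : code n) (d : nat) : Prop :=
  min_dist_ge C d /\ exists x y, [/\ x \in C, y \in C, x != y & hdist x y = d].

Definition preparata n (C : code n) : Prop :=
  [/\ exists m, [/\ 4 <= m, ~~ odd m & n = 2 ^ m],
      min_dist C 6 &
      forall C' : code n, min_dist_ge C' 6 -> #|C'| <= #|C| ].

(* Main.v *)
Require Import Defs.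
From mathcomp Require Import all_boot.

Lemma key (n : nat) (x u v : word n) (a b c i : 'I_n) :
  u != v -> 6 <= hdist u v ->
  hdist x u = 6 -> hdist x v = 6 ->
  a != b -> a != c -> b != c ->
  i \notin [set a; b; c] ->
  x a != u a -> x b != u b -> x c != u c -> x i != u i ->
  x a != v a -> x b != v b -> x c != v c -> x i != v i -> False.
Proof.
move=> _ Huv Hu Hv ab ac bc iS xa xb xc xi ya yb yc yi.
set Du := [set j | x j != u j]; set Dv := [set j | x j != v j].
set S := [set a; b; c; i].
have cS : #|S| = 4.
  have -> : S = i |: (c |: (b |: [set a])).
    by apply/setP => j; rewrite !inE; case: (j == a); case: (j == b);
      case: (j == c); case: (j == i).
  rewrite !cardsU1 cards1 !inE.
  move: iS; rewrite !inE => /norP [/norP [ia ib] ic].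
  by rewrite (negbTE ia) (negbTE ib) (negbTE ic) (eq_sym c b) (eq_sym c a) (eq_sym b a) (negbTE ab) (negbTE ac) (negbTE bc).
have SU : S \subset Du by apply/subsetP => j; rewrite !inE =>
  /orP [/orP [/orP [] | ] | ] /eqP ->.
have SV : S \subset Dv by apply/subsetP => j; rewrite !inE =>
  /orP [/orP [/orP [] | ] | ] /eqP ->.
have sub : [set j | u j != v j] \subset (Du :\: S) :|: (Dv :\: S).
  apply/subsetP => j; rewrite !inE => Hj.
  case: (boolP (j \in S)) => /= jS.
    move/subsetP: SU => /(_ _ jS); rewrite inE => H1.
    move/subsetP: SV => /(_ _ jS); rewrite inE => H2.
    by move: Hj H1 H2; case: (x j); case: (u j); case: (v j).
  move: jS; rewrite !inE => -> /=.
  by move: Hj; case: (x j); case: (u j); case: (v j).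
have := subset_leq_card sub.
rewrite -/(hdist u v).
have := leq_card_setU (Du :\: S) (Dv :\: S) => /leqifP.
rewrite !cardsDS // -/(hdist x u) -/(hdist x v) Hu Hv cS.
move=> H1 H2.
have H3 : #|Du :\: S :|: Dv :\: S| <= 4.
  by move: H1; case: ifP => _ => [/eqP -> // | /ltnW].
by move: (leq_trans Huv (leq_trans H2 H3)).
Qed.

Theorem lemma7 (n : nat) (P : code n) (x u v : word n) (a b c : 'I_n) :
  preparata P ->
  x \in P ->
  a \in supp x -> b \in supp x -> c \in supp x ->
  a != b -> a != c -> b != c ->
  u \in P -> v \in P -> u != v ->
  hdist x u = 6 -> hdist x v = 6 ->
  ~~ u a -> ~~ u b -> ~~ u c ->
  ~~ v a -> ~~ v b -> ~~ v c ->
  (forall i, i \in supp x :\: [set a; b; c] -> u i || v i) /\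
  (forall i, i \notin supp x -> ~~ (u i && v i)).
Proof.
case=> _ [md _] _ xP ax bx cx ab ac bc uP vP uv Hu Hv ua ub uc va vb vc.
have Huv := md u v uP vP uv.
rewrite !inE in ax bx cx.
have K := @key n x u v a b c _ uv Huv Hu Hv ab ac bc.
split=> i; rewrite !inE.
- move=> /andP [iS xi]; apply/negPn/negP => /norP [ui vi].
  apply: (K i).
  + by rewrite !inE.
  1-8: by [rewrite ax (negbTE ua) | rewrite bx (negbTE ub) | rewrite cx (negbTE uc)
          | rewrite xi (negbTE ui) | rewrite ax (negbTE va) | rewrite bx (negbTE vb)
          | rewrite cx (negbTE vc) | rewrite xi (negbTE vi)].
- move=> xi; apply/negP => /andP [ui vi].
  have iS : i \notin [set a; b; c].
    rewrite !inE; apply/negP => /orP [/orP [] | ] /eqP E; subst i.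
    + by rewrite ax in xi.
    + by rewrite bx in xi.
    + by rewrite cx in xi.
  apply: (K i iS);
  by [rewrite ax (negbTE ua) | rewrite bx (negbTE ub) | rewrite cx (negbTE uc)
          | rewrite (negbTE xi) ui | rewrite ax (negbTE va) | rewrite bx (negbTE vb)
          | rewrite cx (negbTE vc) | rewrite (negbTE xi) vi].
Qed.
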